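(* Consider a credit-attribution game with authors $N=\{1,\dots,n\}$ and let $x\in N$. As a function of the reliabilities $p=(p_1,\dots,p_n)\in[0,1]^n$, the Shapley value $Sh[\overline{v_{FC}}](x)$ of $x$ in the reliability extension of the full credit game is monotonically decreasing in the reliability $p_j$ of each coauthor $j\in CA(x)$, and the Shapley value $Sh[\overline{v_{FO}}](x)$ in the reliability extension of the full obligation game is monotonically increasing in each $p_j$, $j\in CA(x)$; neither depends on $p_j$ for $j\notin CA(x)\cup\{x\}$.
   Context: A credit-attribution game has authors $N$ and papers $P_1,\dots,P_m$, paper $P_k$ having author set $Auth_k$ and weight $w_k\in\mathbb{R}_+$. $Pap_x$ is the set of papers of $x$ and $CA(x)$ the set of coauthors of $x$, i.e. players $l\ne x$ sharing a paper with $x$. $v_{FC}(S)=\sum\{w_k:Auth_k\cap S\ne\emptyset\}$, $v_{FO}(S)=\sum\{w_k:Auth_k\subseteq S\}$. For $T\subseteq S$, $\Pi_{T,S}=\prod_{i\in T}p_i\prod_{i\in S\setminus T}(1-p_i)$; reliability extension $\overline v(S)=\sum_{T\subseteq S}v(T)\Pi_{T,S}$. Shapley value $Sh[v](x)=\frac1{n!}\sum_\pi[v(S^x_\pi\cup\{x\})-v(S^x_\pi)]$ over permutations $\pi$, $S^x_\pi$ the players preceding $x$. *)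

(* Defs.v *)
From mathcomp Require Import all_boot all_order all_fingroup all_algebra.
Set Implicit Arguments. Unset Strict Implicit. Unset Printing Implicit Defensive.
Import Order.TTheory GRing.Theory Num.Theory.
Local Open Scope ring_scope.

Section CreditGame.
Variables (R : realFieldType) (n m : nat).
(* authors are 'I_n, papers are 'I_m *)
Variables (Auth : 'I_m -> {set 'I_n}) (w : 'I_m -> R).

Definition vFC (S : {set 'I_n}) : R := \sum_(k | Auth k :&: S != set0) w k.
Definition vFO (S : {set 'I_n}) : R := \sum_(k | Auth k \subset S) w k.

Definition coauthors (x : 'I_n) : {set 'I_n} :=
  [set l | (l != x) && [exists k, (x \in Auth k) && (l \in Auth k)]].
End CreditGame.

Section Generic.
Variables (R : realFieldType) (n : nat).

Definition PiTS (p : 'I_n -> R) (T S : {set 'I_n}) : R :=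
  (\prod_(i in T) p i) * \prod_(i in S :\: T) (1 - p i).

Definition rext (v : {set 'I_n} -> R) (p : 'I_n -> R) (S : {set 'I_n}) : R :=
  \sum_(T in powerset S) v T * PiTS p T S.

(* players preceding x in the ordering given by s (s i = position of i) *)
Definition preceding (s : {perm 'I_n}) (x : 'I_n) : {set 'I_n} :=
  [set y | (nat_of_ord (s y) < nat_of_ord (s x))%N].

Definition shapley (v : {set 'I_n} -> R) (x : 'I_n) : R :=
  (n`!%:R)^-1 *
  \sum_(s : {perm 'I_n}) (v (x |: preceding s x) - v (preceding s x)).
End Generic.

(* Main.v *)
Require Import Defs.
From mathcomp Require Import all_boot all_order all_fingroup all_algebra.
Import Order.TTheory GRing.Theory Num.Theory.
Local Open Scope ring_scope.
From mathcomp Require Import ring.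
Section H.
Variables (R : realFieldType) (n : nat).

Lemma prod0_at (S : {set 'I_n}) (F : 'I_n -> R) i :
  i \in S -> F i = 0 -> \prod_(k in S) F k = 0.
Proof. by move=> iS Fi; rewrite (bigD1 i) //= Fi mul0r. Qed.

Lemma expand (a b : 'I_n -> R) (S : {set 'I_n}) :
  \prod_(i in S) (a i + b i) =
  \sum_(T in powerset S) (\prod_(i in T) a i) * \prod_(i in S :\: T) b i.
Proof.
pose F i := if i \in S then a i else 0.
pose G i := if i \in S then b i else 1.
transitivity (\prod_i (F i + G i)).
  rewrite big_mkcond /=; apply: eq_bigr => i _; rewrite /F /G.
  by case: (i \in S); rewrite ?add0r.
rewrite bigA_distr /=.
rewrite [RHS]big_mkcond /=; apply: eq_bigr => T _.
rewrite powersetE; case: (boolP (T \subset S)) => TS.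
  rewrite (bigID (mem T)) /=; congr (_ * _).
    by apply: eq_bigr => i iT; rewrite iT /F (subsetP TS).
  rewrite [RHS](eq_bigl (fun i => (i \notin T) && (i \in S))); last by move=> i; rewrite in_setD.
  rewrite big_mkcondr /=; apply: eq_bigr => i iT.
  by rewrite (negbTE iT) /G.
have [i iT iS] : exists2 i, i \in T & i \notin S.
  by move/subsetPn: TS => [i ? ?]; exists i.
by rewrite (bigD1 i) //= iT /F (negbTE iS) mul0r.
Qed.

Lemma sumPi (p : 'I_n -> R) S : \sum_(T in powerset S) PiTS p T S = 1.
Proof.
rewrite /PiTS -expand; apply: big1 => i _; by rewrite addrC subrK.
Qed.

Lemma rextFC_k (A : {set 'I_n}) p S :
  \sum_(T in powerset S) (A :&: T != set0)%:R * PiTS (R:=R) p T S =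
  1 - \prod_(i in S) (if i \in A then 1 - p i else 1).
Proof.
have -> : \prod_(i in S) (if i \in A then 1 - p i else 1) =
  \prod_(i in S) ((if i \in A then 0 else p i) + (1 - p i)).
  by apply: eq_bigr => i _; case: (i \in A); rewrite ?add0r // addrC subrK.
rewrite expand.
have -> : forall X : R, 1 - X = (\sum_(T in powerset S) PiTS p T S) - X by move=> X; rewrite sumPi.
rewrite -sumrB; apply: eq_bigr => T; rewrite powersetE => TS.
rewrite /PiTS; case: (boolP (A :&: T == set0)) => /= h.
  rewrite mul0r (_ : \prod_(i in T) (if i \in A then 0 else p i) = \prod_(i in T) p i) ?subrr //.
  apply: eq_bigr => i iT; case: ifP => // iA.
  by move/eqP: h => /setP /(_ i); rewrite in_setI iA iT in_set0.
have [i] := set0Pn _ h; rewrite in_setI => /andP [iA iT].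
by rewrite mul1r (@prod0_at T (fun k => if k \in A then 0 else p k) i) // ?iA // mul0r subr0.
Qed.

Lemma rextFO_k (A : {set 'I_n}) p S :
  \sum_(T in powerset S) (A \subset T)%:R * PiTS (R:=R) p T S =
  ((A \subset S)%:R : R) * \prod_(i in S) (if i \in A then p i else 1).
Proof.
case: (boolP (A \subset S)) => AS; last first.
  rewrite mul0r; apply: big1 => T; rewrite powersetE => TS.
  case: (boolP (A \subset T)) => AT; last by rewrite mul0r.
  by move: AS; rewrite (subset_trans AT TS).
rewrite mul1r.
have -> : \prod_(i in S) (if i \in A then p i else 1) =
  \prod_(i in S) (p i + (if i \in A then 0 else 1 - p i)).
  by apply: eq_bigr => i _; case: (i \in A); rewrite ?addr0 // addrC subrK.
rewrite expand; apply: eq_bigr => T; rewrite powersetE => TS.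
rewrite /PiTS; case: (boolP (A \subset T)) => AT.
  rewrite mul1r; congr (_ * _); apply: eq_bigr => i; rewrite in_setD => /andP [iT _].
  by case: ifP => // iA; move: iT; rewrite (subsetP AT).
have [i iA iT] : exists2 i, i \in A & i \notin T.
  by move/subsetPn: AT => [i ? ?]; exists i.
rewrite mul0r (@prod0_at (S :\: T) (fun k => if k \in A then 0 else 1 - p k) i) ?mulr0 // ?iA //.
by rewrite in_setD iT (subsetP AS).
Qed.


Definition fF (p : 'I_n -> R) (A : {set 'I_n}) i : R := if i \in A then 1 - p i else 1.
Definition gF (p : 'I_n -> R) (A : {set 'I_n}) i : R := if i \in A then p i else 1.

Variables (m : nat) (Auth : 'I_m -> {set 'I_n}) (w : 'I_m -> R).

Lemma rextFC p S : rext (vFC Auth w) p S =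
  \sum_k w k * (1 - \prod_(i in S) fF p (Auth k) i).
Proof.
rewrite /rext /vFC.
under eq_bigr => T _ do rewrite big_mkcond big_distrl /=.
rewrite exchange_big /=; apply: eq_bigr => k _.
rewrite -rextFC_k big_distrr /=; apply: eq_bigr => T _.
by case: ifP => _; rewrite ?mul1r // mul0r mulr0.
Qed.

Lemma rextFO p S : rext (vFO Auth w) p S =
  \sum_k w k * ((Auth k \subset S)%:R * \prod_(i in S) gF p (Auth k) i).
Proof.
rewrite /rext /vFO.
under eq_bigr => T _ do rewrite big_mkcond big_distrl /=.
rewrite exchange_big /=; apply: eq_bigr => k _.
rewrite -rextFO_k big_distrr /=; apply: eq_bigr => T _.
by case: ifP => _; rewrite ?mul1r // mul0r mulr0.
Qed.

Lemma margFC p x (P : {set 'I_n}) : x \notin P ->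
  rext (vFC Auth w) p (x |: P) - rext (vFC Auth w) p P =
  \sum_k w k * ((1 - fF p (Auth k) x) * \prod_(i in P) fF p (Auth k) i).
Proof.
move=> xP; rewrite !rextFC -sumrB; apply: eq_bigr => k _.
rewrite big_setU1 //=.
by ring.
Qed.

Lemma subU1 (A P : {set 'I_n}) x : x \notin A -> (A \subset x |: P) = (A \subset P).
Proof.
move=> xA; apply/idP/idP; last by move=> h; apply: subset_trans h (subsetU1 _ _).
move/subsetP => h; apply/subsetP => y yA; move: (h y yA); rewrite in_setU1.
by case/orP => // /eqP e; move: xA; rewrite -e yA.
Qed.

Lemma margFO p x (P : {set 'I_n}) : x \notin P ->
  rext (vFO Auth w) p (x |: P) - rext (vFO Auth w) p P =
  \sum_k w k * (if x \in Auth k then (Auth k \subset x |: P)%:R *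
                  \prod_(i in x |: P) gF p (Auth k) i else 0).
Proof.
move=> xP; rewrite !rextFO -sumrB; apply: eq_bigr => k _.
case: (boolP (x \in Auth k)) => xA.
  have -> : (Auth k \subset P) = false.
    by apply/negbTE/subsetPn; exists x.
  by rewrite /= mul0r mulr0 subr0.
rewrite subU1 // big_setU1 //= /gF (negbTE xA) mul1r.
by rewrite subrr mulr0.
Qed.

End H.

Lemma fF_bnd (R : realFieldType) (r1 r2 : R) (b : bool) :
  0 <= r1 -> r1 <= r2 -> r2 <= 1 ->
  0 <= (if b then 1 - r2 else 1) <= (if b then 1 - r1 else 1).
Proof.
move=> h0 h12 h1; case: b; last by rewrite lexx ler01.
by rewrite subr_ge0 h1 /= lerB.
Qed.

Lemma gF_bnd (R : realFieldType) (r1 r2 : R) (b : bool) :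
  0 <= r1 -> r1 <= r2 ->
  0 <= (if b then r1 else 1) <= (if b then r2 else 1).
Proof. by move=> h0 h12; case: b; rewrite ?lexx ?ler01 ?h0. Qed.

Theorem theorem8 (R : realFieldType) (n m : nat)
    (Auth : 'I_m -> {set 'I_n}) (w : 'I_m -> R)
    (hw : forall k, 0 <= w k) (x : 'I_n) :
  forall (j : 'I_n) (p q : 'I_n -> R),
    (forall i, 0 <= p i <= 1) -> (forall i, 0 <= q i <= 1) ->
    (forall i, i != j -> p i = q i) ->
    (j \in coauthors Auth x -> p j <= q j ->
       shapley (rext (vFC Auth w) q) x <= shapley (rext (vFC Auth w) p) x /\
       shapley (rext (vFO Auth w) p) x <= shapley (rext (vFO Auth w) q) x) /\
    (j \notin x |: coauthors Auth x ->
       shapley (rext (vFC Auth w) p) x = shapley (rext (vFC Auth w) q) x /\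
       shapley (rext (vFO Auth w) p) x = shapley (rext (vFO Auth w) q) x).
Proof.
move=> j p q hp hq hpq.
have xP : forall s : {perm 'I_n}, x \notin preceding s x.
  by move=> s; rewrite inE ltnn.
have inv0 : 0 <= ((n`!)%:R : R)^-1 by rewrite invr_ge0 ler0n.
split.
  move=> jC pq.
  have jx : j != x by move: jC; rewrite inE => /andP [].
  have px : p x = q x by apply: hpq; rewrite eq_sym.
  have hle : forall i, p i <= q i.
    by move=> i; case: (eqVneq i j) => [->|ij] //; rewrite hpq.
  split; rewrite /shapley; apply: ler_wpM2l => //; apply: ler_sum => s _;
    rewrite ?margFC ?margFO ?xP //; apply: ler_sum => k _;
    apply: ler_wpM2l => //.
    rewrite /fF px; apply: ler_wpM2l.
      case: (x \in Auth k); last by rewrite subrr.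
      by rewrite opprB addrC subrK; case/andP: (hq x).
    apply: ler_prod => i _; rewrite /fF.
    by apply: fF_bnd; [case/andP: (hp i) | apply: hle | case/andP: (hq i)].
  case: (x \in Auth k) => //; apply: ler_wpM2l; first exact: ler0n.
  apply: ler_prod => i _; rewrite /gF.
  by apply: gF_bnd; [case/andP: (hp i) | apply: hle].
rewrite in_setU1 negb_or => /andP [jx jC].
have jA : forall k, x \in Auth k -> j \notin Auth k.
  move=> k xA; apply/negP => jA; move/negP: jC; apply.
  by rewrite inE jx /=; apply/existsP; exists k; rewrite xA jA.
have fe : forall k i, x \in Auth k -> @fF _ _ p (Auth k) i = @fF _ _ q (Auth k) i.
  move=> k i xA; rewrite /fF; case: (eqVneq i j) => [->|ij].
    by rewrite (negbTE (jA k xA)).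
  by rewrite hpq.
have ge : forall k i, x \in Auth k -> @gF _ _ p (Auth k) i = @gF _ _ q (Auth k) i.
  move=> k i xA; rewrite /gF; case: (eqVneq i j) => [->|ij].
    by rewrite (negbTE (jA k xA)).
  by rewrite hpq.
split; rewrite /shapley; congr (_ * _); apply: eq_bigr => s _;
  rewrite ?margFC ?margFO ?xP //; apply: eq_bigr => k _.
  case: (boolP (x \in Auth k)) => xA.
    rewrite fe //; congr (_ * (_ * _)); apply: eq_bigr => i _; exact: fe.
  by rewrite /fF (negbTE xA) subrr !mul0r.
case: (boolP (x \in Auth k)) => xA //.
congr (_ * (_ * _)); apply: eq_bigr => i _; exact: ge.
Qed.
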